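(* Assume $(\mu,\vec w_1,\vec w_2)$ is a perfect combination and let $g=S^{-1}\bar S$ be the Gauss–Borel factorization of its moment matrix. Define, for $l\ge0$, $A^{(l)}_a(x)=\sum_{i\le l,\ a_1(i)=a}S_{l,i}x^{k_1(i)}$ ($a=1,\dots,p_1$) and $\bar A^{(l)}_b(x)=\sum_{j\le l,\ a_2(j)=b}x^{k_2(j)}\bar S'_{j,l}$ ($b=1,\dots,p_2$), where $\bar S'=\bar S^{-1}$. Then: (i) $(A^{(l)}_1,\dots,A^{(l)}_{p_1})$ is the unique tuple of polynomials with $\deg A^{(l)}_a\le\nu_{1,a}(l)-1$, with $A^{(l)}_{a_1(l)}$ monic of degree $\nu_{1,a_1(l)}(l)-1$, and $$\int\Big(\sum_{a=1}^{p_1}A^{(l)}_a(x)w_{1,a}(x)\Big)w_{2,b}(x)x^k\,d\mu(x)=0,\qquad 0\le k\le\nu_{2,b}(l-1)-1,\ b=1,\dots,p_2;$$ i.e. it is the mixed multiple orthogonal polynomial system with degree vectors $[\vec\nu_1(l);\vec\nu_2(l-1)]$ and type II normalization in the component $a_1(l)$. (ii) $(\bar A^{(l)}_1,\dots,\bar A^{(l)}_{p_2})$ is the unique tuple of polynomials with $\deg\bar A^{(l)}_b\le\nu_{2,b}(l)-1$ such that $$\int\Big(\sum_{b=1}^{p_2}\bar A^{(l)}_b(x)w_{2,b}(x)\Big)w_{1,a}(x)x^k\,d\mu(x)=0,\qquad 0\le k\le\nu_{1,a}(l-1)-1,\ a=1,\dots,p_1,$$ and $\int\big(\sum_{b}\bar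 A^{(l)}_b(x)w_{2,b}(x)\big)w_{1,a_1(l)}(x)x^{\nu_{1,a_1(l)}(l-1)}d\mu(x)=1$; i.e. it is the mixed multiple orthogonal system with degree vectors $[\vec\nu_2(l);\vec\nu_1(l-1)]$ and type I normalization with respect to $a_1(l)$.
   Context: Let $\mu$ be a finite Borel measure on an interval $\Delta\subset\mathbb R$ with infinitely many points in its support, not changing sign, and $w_{1,a}$ ($a=1,\dots,p_1$), $w_{2,b}$ ($b=1,\dots,p_2$) real integrable functions on $\Delta$ not changing sign (all integrals finite). Compositions $\vec n_\ell=(n_{\ell,1},\dots,n_{\ell,p_\ell})\in\mathbb N^{p_\ell}$, $\ell=1,2$, are fixed. Each $i\in\mathbb Z_+$ is uniquely $i=q|\vec n_\ell|+n_{\ell,1}+\dots+n_{\ell,a-1}+r$, $0\le r<n_{\ell,a}$; put $a_\ell(i)=a$, $k_\ell(i)=qn_{\ell,a}+r$. The moment matrix is $g=(g_{i,j})_{i,j\ge0}$, $g_{i,j}=\int x^{k_1(i)+k_2(j)}w_{1,a_1(i)}(x)w_{2,a_2(j)}(x)\,d\mu(x)$. Degree vectors: $\nu_{\ell,a}(i)=\#\{0\le j\le i:a_\ell(j)=a\}$ (so $|\vec\nu_\ell(i)|=i+1$), $\vec\nu_\ell(-1)=0$. The combination $(\mu,\vec w_1,\vec w_2)$ is perfect if for all $\vec\nu_1\in\mathbb Z_+^{p_1}$, $\vec\nu_2\in\mathbb Z_+^{p_2}$ with $|\vec\nu_1|=|\vec\nu_2|+1$, any polynomials $A_1,\dots,A_{p_1}$,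 not all zero, with $\deg A_a\le\nu_{1,a}-1$ and $\int\sum_aA_aw_{1,a}w_{2,b}x^jd\mu=0$ for $j=0,\dots,\nu_{2,b}-1$, $b=1,\dots,p_2$, satisfy $\deg A_a=\nu_{1,a}-1$ for all $a$. For a perfect combination all $\det g^{[l]}\neq0$, $g^{[l]}=(g_{i,j})_{0\le i,j<l}$, and the Gauss–Borel factorization $g=S^{-1}\bar S$ exists uniquely, with $S$ lower triangular with unit diagonal and $\bar S$ upper triangular with nonzero diagonal (semi-infinite matrices). *)

(* Defs.v *)
From HB Require Import structures.
From mathcomp Require Import all_boot all_order all_algebra.
From mathcomp Require Import all_classical all_reals all_analysis.
Set Implicit Arguments. Unset Strict Implicit. Unset Printing Implicit Defensive.
Import Order.TTheory GRing.Theory Num.Theory.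
Import numFieldNormedType.Exports.
Local Open Scope classical_set_scope.
Local Open Scope ring_scope.

(* Indices a = 1..p of the paper are represented 0-based: a = 0..p-1 (nat).
   A composition is n : nat -> nat, used on 0..p-1 only. *)

Definition cum (n : nat -> nat) (a : nat) : nat := (\sum_(b < a) n b)%N.

(* a(i): i = q |n| + n_0 + ... + n_{a-1} + r, 0 <= r < n_a *)
Definition aidx (p : nat) (n : nat -> nat) (i : nat) : nat :=
  find (fun a => (i %% cum n p < cum n a.+1)%N) (iota 0 p).

Definition kidx (p : nat) (n : nat -> nat) (i : nat) : nat :=
  ((i %/ cum n p) * n (aidx p n i) + (i %% cum n p - cum n (aidx p n i)))%N.

(* nucount p n a m = #{0 <= j < m : a(j) = a}; hence
   nu_a(i) = nucount p n a i.+1   and   nu_a(i-1) = nucount p n a i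
   (in particular nu_a(-1) = nucount p n a 0 = 0). *)
Definition nucount (p : nat) (n : nat -> nat) (a m : nat) : nat :=
  count (fun j => aidx p n j == a) (iota 0 m).

(* Integration against a measure that does not change sign: the measure is
   eps * mu with mu a (nonnegative) finite measure and eps = 1 or eps = -1. *)
Definition mint (R : realType) (eps : R) (mu : {measure set R -> \bar R})
  (D : set R) (f : R -> R) : R := eps * Rintegral mu D f.

Definition msupport (R : realType) (mu : {measure set R -> \bar R}) (D : set R)
  : set R :=
  [set x | forall e : R, 0 < e -> (0 < mu (D `&` ball x e))%E].

Definition moment (R : realType) (eps : R) (mu : {measure set R -> \bar R})
  (D : set R) (p1 : nat) (n1 : nat -> nat) (w1 : nat -> R -> R)
  (p2 : nat) (n2 : nat -> nat) (w2 : nat -> R -> R) (i j : nat) : R :=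
  mint eps mu D (fun x => x ^+ (kidx p1 n1 i + kidx p2 n2 j)
                          * w1 (aidx p1 n1 i) x * w2 (aidx p2 n2 j) x).

Definition perfect (R : realType) (eps : R) (mu : {measure set R -> \bar R})
  (D : set R) (p1 : nat) (w1 : nat -> R -> R) (p2 : nat) (w2 : nat -> R -> R)
  : Prop :=
  forall (nu1 nu2 : nat -> nat),
    (\sum_(a < p1) nu1 a)%N = (\sum_(b < p2) nu2 b).+1 ->
  forall A : nat -> {poly R},
    (exists a, (a < p1)%N /\ A a != 0) ->
    (forall a, (a < p1)%N -> (size (A a) <= nu1 a)%N) ->
    (forall b j, (b < p2)%N -> (j < nu2 b)%N ->
       mint eps mu D (fun x => (\sum_(a < p1) (A a).[x] * w1 a x)
                                * w2 b x * x ^+ j) = 0) ->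
    forall a, (a < p1)%N -> size (A a) = nu1 a.

Definition lower_unitri (R : realType) (S : nat -> nat -> R) : Prop :=
  (forall i j, (i < j)%N -> S i j = 0) /\ (forall i, S i i = 1).
Definition upper_tri (R : realType) (S : nat -> nat -> R) : Prop :=
  forall i j, (j < i)%N -> S i j = 0.

Definition Apoly (R : realType) (p1 : nat) (n1 : nat -> nat)
  (S : nat -> nat -> R) (l a : nat) : {poly R} :=
  \sum_(i < l.+1 | aidx p1 n1 i == a) S l i *: 'X^(kidx p1 n1 i).
Definition Abarpoly (R : realType) (p2 : nat) (n2 : nat -> nat)
  (Sbar' : nat -> nat -> R) (l b : nat) : {poly R} :=
  \sum_(j < l.+1 | aidx p2 n2 j == b) Sbar' j l *: 'X^(kidx p2 n2 j).

(* Main.v *)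
Require Import Defs.
From HB Require Import structures.
From mathcomp Require Import all_boot all_order all_algebra.
From mathcomp Require Import all_classical all_reals all_analysis.
From mathcomp Require Import zify ring.
Import Order.TTheory GRing.Theory Num.Theory.
Import numFieldNormedType.Exports.

Lemma cumS n a : cum n a.+1 = (cum n a + n a)%N.
Proof. by rewrite /cum big_ord_recr. Qed.

Lemma cum_mono n a b : (a <= b)%N -> (cum n a <= cum n b)%N.
Proof.
move=> ab; elim: b ab => [|b IH]; first by rewrite leqn0 => /eqP->.
rewrite leq_eqVlt => /orP[/eqP->//|]; rewrite ltnS => /IH; rewrite !cumS; lia.
Qed.

Lemma cum_le_p p n a : (a <= p)%N -> (cum n a <= cum n p)%N.
Proof. exact: cum_mono. Qed.

Lemma cumS_pos p n : (0 < p)%N -> (forall a, (a < p)%N -> (0 < n a)%N) ->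
  (0 < cum n p)%N.
Proof.
move=> Hp Hn; case: p Hp Hn => // p _ Hn; rewrite cumS; have := Hn p (ltnSn p); lia.
Qed.

Lemma aidx_spec p n i : (0 < p)%N -> (forall a, (a < p)%N -> (0 < n a)%N) ->
  let a := aidx p n i in let r := (i %% cum n p)%N in
  [/\ (a < p)%N, (cum n a <= r)%N & (r < cum n a.+1)%N].
Proof.
move=> Hp Hn a r.
have Np := cumS_pos p n Hp Hn.
have hasP : has (fun a => (r < cum n a.+1)%N) (iota 0 p).
  apply/hasP; exists p.-1; first by rewrite mem_iota; lia.
  by rewrite prednK // /r ltn_pmod.
have ap : (a < p)%N by rewrite /a /aidx; have := hasP; rewrite has_find size_iota.
split=> //.
- case Ea: a => [|a']; first by rewrite /cum big_ord0.
  have : (a' < a)%N by rewrite Ea.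
  rewrite {1}/a /aidx => /(before_find 0); rewrite nth_iota; last by lia.
  by rewrite add0n; lia.
- have := nth_find 0 hasP; rewrite -/(aidx p n i) -/a nth_iota //.
Qed.

Lemma aidx_eq p n i a : (0 < p)%N -> (forall a, (a < p)%N -> (0 < n a)%N) ->
  (a < p)%N -> (cum n a <= i %% cum n p)%N -> (i %% cum n p < cum n a.+1)%N ->
  aidx p n i = a.
Proof.
move=> Hp Hn ap h1 h2; have [h3 h4 h5] := aidx_spec p n i Hp Hn.
set a' := aidx p n i in h3 h4 h5 *.
case: (ltngtP a' a) => // H.
- have := cum_mono n _ _ H; lia.
- have := cum_mono n _ _ H; lia.
Qed.

Lemma aidxP p n i a : (0 < p)%N -> (forall a, (a < p)%N -> (0 < n a)%N) ->
  (a < p)%N ->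
  (aidx p n i == a) = ((cum n a <= i %% cum n p) && (i %% cum n p < cum n a.+1))%N.
Proof.
move=> Hp Hn ap; apply/eqP/andP.
- by move=> <-; have [] := aidx_spec p n i Hp Hn.
- by case=> *; apply: aidx_eq.
Qed.

Lemma nucountS p n a m :
  nucount p n a m.+1 = (nucount p n a m + (aidx p n m == a))%N.
Proof. by rewrite /nucount -addn1 iotaD count_cat /= addn0. Qed.

Lemma nucount_mono p n a m m' : (m <= m')%N -> (nucount p n a m <= nucount p n a m')%N.
Proof.
elim: m' => [|m' IH]; first by rewrite leqn0 => /eqP->.
rewrite leq_eqVlt => /orP[/eqP->//|]; rewrite ltnS => /IH; rewrite nucountS; lia.
Qed.

Lemma nucount_formula p n a i : (0 < p)%N -> (forall a, (a < p)%N -> (0 < n a)%N) ->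
  (a < p)%N ->
  nucount p n a i = (i %/ cum n p * n a + minn (i %% cum n p - cum n a) (n a))%N.
Proof.
move=> Hp Hn ap; have Np := cumS_pos p n Hp Hn.
have cap : (cum n a.+1 <= cum n p)%N by apply: cum_mono.
have := cumS n a; set N := cum n p.
elim: i => [|i IH] E; first by rewrite /nucount /= div0n mod0n; lia.
rewrite nucountS IH // (aidxP p n i a Hp Hn ap) -/N E.
have ei := divn_eq i N; have lr := ltn_pmod i Np.
set q := (i %/ N)%N in ei *; set r := (i %% N)%N in ei lr *.
have [rN|rN] := ltnP r.+1 N.
- have -> : (i.+1 %/ N = q)%N.
    by rewrite ei -addnS divnMDl // divn_small // addn0.
  have -> : (i.+1 %% N = r.+1)%N by rewrite ei -addnS modnMDl modn_small.
  case: (leqP (cum n a) r) => H1; case: (ltnP r (cum n a + n a)) => H2 /=; lia.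
- have rN' : r.+1 = N by lia.
  have -> : (i.+1 %/ N = q.+1)%N by rewrite ei -addnS rN' -mulSnr mulnK.
  have -> : (i.+1 %% N = 0)%N by rewrite ei -addnS rN' -mulSnr modnMl.
  have := Hn a ap.
  case: (leqP (cum n a) r) => H1; case: (ltnP r (cum n a + n a)) => H2 /=; lia.
Qed.

Lemma kidxE p n i : (0 < p)%N -> (forall a, (a < p)%N -> (0 < n a)%N) ->
  kidx p n i = nucount p n (aidx p n i) i.
Proof.
move=> Hp Hn; have [h1 h2 h3] := aidx_spec p n i Hp Hn.
rewrite (nucount_formula p n _ i Hp Hn h1) /kidx; move: h3; rewrite cumS; lia.
Qed.

Local Open Scope classical_set_scope.
Local Open Scope ring_scope.
Lemma kidx_lt p n i m : (0 < p)%N -> (forall a, (a < p)%N -> (0 < n a)%N) ->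
  (i < m)%N -> (kidx p n i < nucount p n (aidx p n i) m)%N.
Proof.
move=> Hp Hn im; rewrite kidxE //.
have := nucount_mono p n (aidx p n i) _ _ im; rewrite nucountS eqxx; lia.
Qed.

Lemma kidx_ex p n a k m : (0 < p)%N -> (forall a, (a < p)%N -> (0 < n a)%N) ->
  (k < nucount p n a m)%N ->
  exists i, [/\ (i < m)%N, aidx p n i = a & kidx p n i = k].
Proof.
move=> Hp Hn; elim: m => [|m IH]; first by rewrite /nucount.
rewrite nucountS; case: (ltnP k (nucount p n a m)) => H1 H2.
  by have [i [*]] := IH H1; exists i; split => //; apply: ltnW.
have E : aidx p n m = a by case: eqP H2 => //= _; lia.
exists m; split => //; rewrite kidxE // E; move: H2; rewrite E eqxx; lia.
Qed.

Lemma kidx_inj p n i j : (0 < p)%N -> (forall a, (a < p)%N -> (0 < n a)%N) ->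
  aidx p n i = aidx p n j -> kidx p n i = kidx p n j -> i = j.
Proof.
move=> Hp Hn ea; rewrite !kidxE // ea => E.
case: (ltngtP i j) => // ij.
- have := nucount_mono p n (aidx p n j) _ _ ij; rewrite nucountS ea eqxx; lia.
- have := nucount_mono p n (aidx p n j) _ _ ij; rewrite nucountS eqxx; lia.
Qed.

Lemma aidx_lt p n i : (0 < p)%N -> (forall a, (a < p)%N -> (0 < n a)%N) ->
  (aidx p n i < p)%N.
Proof. by move=> Hp Hn; have [] := aidx_spec p n i Hp Hn. Qed.

Lemma reindex_nu (R : nzRingType) p n (F : nat -> nat -> R) m :
  (0 < p)%N -> (forall a, (a < p)%N -> (0 < n a)%N) ->
  (\sum_(a < p) \sum_(k < nucount p n a m) F a k =
   \sum_(i < m) F (aidx p n i) (kidx p n i))%R.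
Proof.
move=> Hp Hn; elim: m => [|m IH].
  by rewrite big_ord0 big1 // => a _; rewrite /nucount big_ord0.
rewrite big_ord_recr /= -IH.
have -> : (\sum_(a < p) \sum_(k < nucount p n a m.+1) F a k =
   \sum_(a < p) (\sum_(k < nucount p n a m) F a k +
        (aidx p n m == a)%:R * F a (nucount p n a m)))%R.
  apply: eq_bigr => a _; rewrite nucountS; case: eqP => _.
    by rewrite addn1 big_ord_recr mul1r.
  by rewrite addn0 mul0r addr0.
rewrite big_split /=; congr (_ + _)%R.
have ap := aidx_lt p n m Hp Hn.
rewrite (bigD1 (Ordinal ap)) //= eqxx mul1r big1 ?addr0; first by rewrite kidxE.
move=> j /eqP jne; case: eqP; last by rewrite mul0r.
by move=> E; exfalso; apply: jne; apply: val_inj; rewrite /= E.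
Qed.

Lemma coef_gen (R : nzRingType) p n (c : nat -> R) l i0 :
  (0 < p)%N -> (forall a, (a < p)%N -> (0 < n a)%N) -> (i0 < l)%N ->
  ((\sum_(i < l | aidx p n i == aidx p n i0) c i *: 'X^(kidx p n i))`_(kidx p n i0)
   = c i0)%R.
Proof.
move=> Hp Hn il.
rewrite coef_sum (bigD1 (Ordinal il)) //= coefZ coefXn eqxx mulr1 big1 ?addr0 //.
move=> j /andP[/eqP ea jne]; rewrite coefZ coefXn.
case: eqP; last by rewrite mulr0.
move=> E; exfalso; move/eqP: jne; apply; apply: val_inj => /=.
exact: (kidx_inj p n _ _ Hp Hn ea (esym E)).
Qed.

Lemma size_gen (R : nzRingType) p n (c : nat -> R) m a :
  (0 < p)%N -> (forall a, (a < p)%N -> (0 < n a)%N) ->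
  (size (\sum_(i < m | aidx p n i == a) c i *: 'X^(kidx p n i))%R
     <= nucount p n a m)%N.
Proof.
move=> Hp Hn.
apply: (big_ind (fun q : {poly R} => size q <= nucount p n a m)%N).
- by rewrite size_poly0.
- by move=> x y hx hy; apply: leq_trans (size_polyD _ _) _; rewrite geq_max hx hy.
- move=> i /eqP ea; apply: leq_trans (size_scale_leq _ _) _.
  by rewrite size_polyXn -ea; apply: kidx_lt.
Qed.

Lemma monic_gen (R : nzRingType) p n (c : nat -> R) l :
  (0 < p)%N -> (forall a, (a < p)%N -> (0 < n a)%N) -> c l = 1%R ->
  let P := (\sum_(i < l.+1 | aidx p n i == aidx p n l) c i *: 'X^(kidx p n i))%R in
  P \is monic /\ size P = nucount p n (aidx p n l) l.+1.
Proof.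
move=> Hp Hn cl P.
have E : P = (\sum_(i < l | aidx p n i == aidx p n l) c i *: 'X^(kidx p n i)
              + 'X^(kidx p n l))%R.
  by rewrite /P big_mkcond big_ord_recr /= eqxx cl scale1r -big_mkcond.
have sz := size_gen R p n c l (aidx p n l) Hp Hn.
have lt : (size (\sum_(i < l | aidx p n i == aidx p n l) c i *: 'X^(kidx p n i))%R
           < size ('X^(kidx p n l) : {poly R}))%N.
  by rewrite size_polyXn kidxE // ltnS.
rewrite E; split.
  by rewrite monicE lead_coefDr // lead_coefXn.
rewrite addrC size_polyDl // size_polyXn nucountS eqxx kidxE //; lia.
Qed.

Lemma int_sum (R : realType) (mu : {measure set R -> \bar R}) (D : set R)
  (mD : measurable D) (I : Type) (r : seq I) (c : I -> R) (f : I -> R -> R) :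
  (forall i, mu.-integrable D (fun x => (f i x)%:E)) ->
  mu.-integrable D (fun x => (\sum_(i <- r) c i * f i x)%:E).
Proof.
move=> Hf; elim: r => [|i r IH].
  by apply: (eq_integrable mD _ _ _ (integrable0 mu D)) => x _; rewrite big_nil.
apply: (eq_integrable mD _ _ _ (integrableD mD (integrableZl mD (c i) (Hf i)) IH)) => x _.
by rewrite big_cons /= EFinD EFinM.
Qed.

Lemma RI_sum (R : realType) (mu : {measure set R -> \bar R}) (D : set R)
  (mD : measurable D) (I : Type) (r : seq I) (c : I -> R) (f : I -> R -> R) :
  (forall i, mu.-integrable D (fun x => (f i x)%:E)) ->
  Rintegral mu D (fun x => \sum_(i <- r) c i * f i x)
  = \sum_(i <- r) c i * Rintegral mu D (f i).
Proof.
move=> Hf; elim: r => [|i r IH].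
  rewrite big_nil; under eq_Rintegral do rewrite big_nil.
  by rewrite Rintegral_cst // mul0r.
rewrite big_cons; under eq_Rintegral do rewrite big_cons.
rewrite RintegralD //; last exact: int_sum.
  by rewrite RintegralZl //; [congr (_ + _); exact: IH | exact: Hf].
apply: (eq_integrable mD _ _ _ (integrableZl mD (c i) (Hf i))) => x _.
by rewrite /= EFinM.
Qed.

Lemma Lexp (R : realType) eps (mu : {measure set R -> \bar R}) (D : set R)
  (mD : measurable D) p n (h : nat -> R -> R) (u : R -> R) (P : nat -> {poly R}) m :
  (0 < p)%N -> (forall a, (a < p)%N -> (0 < n a)%N) ->
  (forall a k, (a < p)%N -> mu.-integrable D (fun x => (x ^+ k * h a x * u x)%:E)) ->
  (forall a, (a < p)%N -> (size (P a) <= nucount p n a m)%N) ->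
  mint eps mu D (fun x => (\sum_(a < p) (P a).[x] * h a x) * u x) =
  \sum_(i < m) (P (aidx p n i))`_(kidx p n i) *
      mint eps mu D (fun x => x ^+ (kidx p n i) * h (aidx p n i) x * u x).
Proof.
move=> Hp Hn Hint Hsz.
have E : (fun x => (\sum_(a < p) (P a).[x] * h a x) * u x) =
  (fun x => \sum_(i <- index_enum 'I_m) (P (aidx p n i))`_(kidx p n i) *
      (x ^+ (kidx p n i) * h (aidx p n i) x * u x)).
  apply: boolp.funext => x.
  rewrite -(reindex_nu R p n (fun a k => (P a)`_k * (x ^+ k * h a x * u x))) //.
  rewrite mulr_suml; apply: eq_bigr => a _.
  rewrite (horner_coef_wide x (Hsz a (ltn_ord a))) !mulr_suml.
  by apply: eq_bigr => k _; rewrite !mulrA.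
rewrite /mint E RI_sum //; last first.
  by move=> i; apply: Hint; apply: aidx_lt.
by rewrite mulr_sumr; apply: eq_bigr => i _; rewrite mulrCA.
Qed.

Lemma sum_trunc (R : realType) (F : nat -> R) i m : (i < m)%N ->
  (forall k, (i < k)%N -> F k = 0) ->
  \sum_(k < m) F k = \sum_(k < i.+1) F k.
Proof.
move=> im HF; rewrite (big_ord_widen m F im) [RHS]big_mkcond /=.
apply: eq_bigr => k _; case: ifP => // /negbT; rewrite -leqNgt => H.
by rewrite HF.
Qed.

Lemma Gunit (R : realType) (S Sbar g : nat -> nat -> R) m :
  lower_unitri S -> upper_tri Sbar -> (forall i, Sbar i i != 0) ->
  (forall i j, \sum_(k < i.+1) S i k * g k j = Sbar i j) ->
  (\matrix_(i < m, j < m) g i j) \in unitmx.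
Proof.
move=> [S0 S1] B0 B1 SgB.
set G := \matrix_(i < m, j < m) g i j.
set Sm := \matrix_(i < m, j < m) S i j.
set Bm := \matrix_(i < m, j < m) Sbar i j.
have E : Sm *m G = Bm.
  apply/matrixP => i j; rewrite !mxE -SgB.
  transitivity (\sum_(k < m) S i k * g k j); first by apply: eq_bigr => k _; rewrite !mxE.
  apply: (sum_trunc _ (fun k => S i k * g k j) _ _ (ltn_ord i)) => k ik.
  by rewrite S0 // mul0r.
have dS : \det Sm = 1.
  rewrite det_trig; last by apply/is_trig_mxP => i j ij; rewrite mxE S0.
  by rewrite big1 // => i _; rewrite mxE S1.
have dB : \det Bm != 0.
  rewrite -det_tr det_trig; last by apply/is_trig_mxP => i j ij; rewrite !mxE B0.
  by rewrite prodf_seq_neq0; apply/allP => i _; rewrite !mxE B1.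
by rewrite unitmxE unitfE; move: dB; rewrite -E det_mulmx dS mul1r.
Qed.

Lemma rowzero (R : realType) (S Sbar g : nat -> nat -> R) m (c : nat -> R) :
  lower_unitri S -> upper_tri Sbar -> (forall i, Sbar i i != 0) ->
  (forall i j, \sum_(k < i.+1) S i k * g k j = Sbar i j) ->
  (forall j, (j < m)%N -> \sum_(i < m) c i * g i j = 0) ->
  forall i, (i < m)%N -> c i = 0.
Proof.
move=> H1 H2 H3 H4 H i im.
have U := Gunit R S Sbar g m H1 H2 H3 H4.
set v := \row_(i < m) c i.
have E : v *m (\matrix_(i < m, j < m) g i j) = 0.
  apply/rowP => j; rewrite !mxE; transitivity (\sum_(i < m) c i * g i j).
    by apply: eq_bigr => k _; rewrite !mxE.
  exact: H.
have : v = 0 by rewrite -(mulmxK U v) E mul0mx.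
by move/rowP/(_ (Ordinal im)); rewrite !mxE.
Qed.

Lemma colzero (R : realType) (S Sbar g : nat -> nat -> R) m (c : nat -> R) :
  lower_unitri S -> upper_tri Sbar -> (forall i, Sbar i i != 0) ->
  (forall i j, \sum_(k < i.+1) S i k * g k j = Sbar i j) ->
  (forall i, (i < m)%N -> \sum_(j < m) g i j * c j = 0) ->
  forall j, (j < m)%N -> c j = 0.
Proof.
move=> H1 H2 H3 H4 H j jm.
have U := Gunit R S Sbar g m H1 H2 H3 H4.
set v := \col_(i < m) c i.
have E : (\matrix_(i < m, j < m) g i j) *m v = 0.
  apply/colP => i; rewrite !mxE; transitivity (\sum_(j < m) g i j * c j).
    by apply: eq_bigr => k _; rewrite !mxE.
  exact: H.
have : v = 0 by rewrite -(mulKmx U v) E mulmx0.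
by move/colP/(_ (Ordinal jm)); rewrite !mxE.
Qed.

Lemma Vsol (R : realType) (S Sbar Sbar' g : nat -> nat -> R) l :
  lower_unitri S -> upper_tri Sbar ->
  (forall i j, \sum_(k < i.+1) S i k * g k j = Sbar i j) ->
  (forall i j, \sum_(k < j.+1) Sbar i k * Sbar' k j = (i == j)%:R) ->
  forall i, (i <= l)%N -> \sum_(j < l.+1) Sbar' j l * g i j = (i == l)%:R.
Proof.
move=> [S0 S1] B0 SgB BB'.
have key : forall i, \sum_(k < i.+1) S i k * (\sum_(j < l.+1) Sbar' j l * g k j)
                     = (i == l)%:R.
  move=> i; rewrite -BB'.
  under eq_bigr do rewrite mulr_sumr.
  rewrite exchange_big /=; apply: eq_bigr => j _.
  rewrite -SgB mulr_suml; apply: eq_bigr => k _.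
  by rewrite [Sbar' _ _ * _]mulrC mulrA.
elim/ltn_ind => i IH il.
have K := key i; rewrite big_ord_recr /= S1 mul1r big1 ?add0r in K; first exact: K.
move=> k _; have hk : (k < i)%N := ltn_ord k.
rewrite IH //=; last by lia.
rewrite (_ : (k == l :> nat) = false) ?mulr0 //; apply/eqP; lia.
Qed.

Lemma poly_eq_coefs (R : realType) p n m (P Q : nat -> {poly R}) a :
  (0 < p)%N -> (forall a, (a < p)%N -> (0 < n a)%N) ->
  (size (P a) <= nucount p n a m)%N -> (size (Q a) <= nucount p n a m)%N ->
  (forall i, (i < m)%N -> (P (aidx p n i))`_(kidx p n i) = (Q (aidx p n i))`_(kidx p n i)) ->
  P a = Q a.
Proof.
move=> Hp Hn sP sQ H; apply/polyP => k.
case: (ltnP k (nucount p n a m)) => hk.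
  by have [i [im <- <-]] := kidx_ex p n a k m Hp Hn hk; exact: H.
by rewrite !nth_default //; apply: leq_trans hk.
Qed.

Theorem proposition2p3 (R : realType) (D : set R) (eps : R)
  (mu : {finite_measure set R -> \bar R})
  (p1 p2 : nat) (n1 n2 : nat -> nat) (w1 w2 : nat -> R -> R)
  (S Sbar Sbar' : nat -> nat -> R) :
  is_interval D -> measurable D ->
  (eps = 1 \/ eps = -1) ->
  ~ finite_set (msupport mu D) ->
  (0 < p1)%N -> (0 < p2)%N ->
  (forall a, (a < p1)%N -> (0 < n1 a)%N) ->
  (forall b, (b < p2)%N -> (0 < n2 b)%N) ->
  (forall a, (a < p1)%N -> mu.-integrable D (fun x => (w1 a x)%:E)) ->
  (forall b, (b < p2)%N -> mu.-integrable D (fun x => (w2 b x)%:E)) ->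
  (forall a, (a < p1)%N ->
     (forall x, D x -> 0 <= w1 a x) \/ (forall x, D x -> w1 a x <= 0)) ->
  (forall b, (b < p2)%N ->
     (forall x, D x -> 0 <= w2 b x) \/ (forall x, D x -> w2 b x <= 0)) ->
  (forall a b k, (a < p1)%N -> (b < p2)%N ->
     mu.-integrable D (fun x => (x ^+ k * w1 a x * w2 b x)%:E)) ->
  perfect eps mu D p1 w1 p2 w2 ->
  (* Gauss--Borel factorization g = S^{-1} Sbar, written as S g = Sbar *)
  lower_unitri S ->
  upper_tri Sbar -> (forall i, Sbar i i != 0) ->
  (forall i j, \sum_(k < i.+1) S i k * moment eps mu D p1 n1 w1 p2 n2 w2 k j
               = Sbar i j) ->
  (* Sbar' = Sbar^{-1} *)
  upper_tri Sbar' ->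
  (forall i j, \sum_(k < j.+1) Sbar i k * Sbar' k j = (i == j)%:R) ->
  forall l : nat,
  let a1 := aidx p1 n1 in
  let nu1 a i := nucount p1 n1 a i.+1 in     (* nu_{1,a}(i) *)
  let nu1m a i := nucount p1 n1 a i in       (* nu_{1,a}(i-1) *)
  let nu2 b i := nucount p2 n2 b i.+1 in     (* nu_{2,b}(i) *)
  let nu2m b i := nucount p2 n2 b i in       (* nu_{2,b}(i-1) *)
  let I := mint eps mu D in
  let typeII (B : nat -> {poly R}) :=
    [/\ forall a, (a < p1)%N -> (size (B a) <= nu1 a l)%N,
        B (a1 l) \is monic /\ size (B (a1 l)) = nu1 (a1 l) l &
        forall b k, (b < p2)%N -> (k < nu2m b l)%N ->
          I (fun x => (\sum_(a < p1) (B a).[x] * w1 a x) * w2 b x * x ^+ k) = 0]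
  in
  let typeI (B : nat -> {poly R}) :=
    [/\ forall b, (b < p2)%N -> (size (B b) <= nu2 b l)%N,
        forall a k, (a < p1)%N -> (k < nu1m a l)%N ->
          I (fun x => (\sum_(b < p2) (B b).[x] * w2 b x) * w1 a x * x ^+ k) = 0 &
        I (fun x => (\sum_(b < p2) (B b).[x] * w2 b x) * w1 (a1 l) x
                      * x ^+ (nu1m (a1 l) l)) = 1]
  in
  (typeII (Apoly p1 n1 S l) /\
   forall B, typeII B -> forall a, (a < p1)%N -> B a = Apoly p1 n1 S l a) /\
  (typeI (Abarpoly p2 n2 Sbar' l) /\
   forall B, typeI B -> forall b, (b < p2)%N -> B b = Abarpoly p2 n2 Sbar' l b).
Proof.
move=> HD mD Heps Hsupp Hp1 Hp2 Hn1 Hn2 Hw1 Hw2 Hs1 Hs2 Hint Hperf HS HB HBd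
  HSgB HB' HBB' l a1 nu1 nu1m nu2 nu2m I typeII typeI.
rewrite /typeII /typeI /I /nu1 /nu1m /nu2 /nu2m /a1 {typeII typeI I nu1 nu1m nu2 nu2m a1}.
set g := moment eps mu D p1 n1 w1 p2 n2 w2.
have mom1 : forall i j, mint eps mu D (fun x => x ^+ (kidx p1 n1 i) * w1 (aidx p1 n1 i) x
     * (w2 (aidx p2 n2 j) x * x ^+ (kidx p2 n2 j))) = g i j.
  move=> i j; rewrite /g /moment; congr (mint _ _ _ _); apply: boolp.funext => x.
  by rewrite exprD; ring.
have mom2 : forall i j, mint eps mu D (fun x => x ^+ (kidx p2 n2 j) * w2 (aidx p2 n2 j) x
     * (w1 (aidx p1 n1 i) x * x ^+ (kidx p1 n1 i))) = g i j.
  move=> i j; rewrite /g /moment; congr (mint _ _ _ _); apply: boolp.funext => x.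
  by rewrite exprD; ring.
have LII : forall (P : nat -> {poly R}) j, (j < l)%N ->
    (forall a, (a < p1)%N -> (size (P a) <= nucount p1 n1 a l.+1)%N) ->
    mint eps mu D (fun x => (\sum_(a < p1) (P a).[x] * w1 a x) * w2 (aidx p2 n2 j) x
                             * x ^+ (kidx p2 n2 j))
    = \sum_(i < l.+1) (P (aidx p1 n1 i))`_(kidx p1 n1 i) * g i j.
  move=> P j jl hP.
  have -> : (fun x => (\sum_(a < p1) (P a).[x] * w1 a x) * w2 (aidx p2 n2 j) x
                             * x ^+ (kidx p2 n2 j)) =
            (fun x => (\sum_(a < p1) (P a).[x] * w1 a x) * (w2 (aidx p2 n2 j) x
                             * x ^+ (kidx p2 n2 j))).
    by apply: boolp.funext => x; rewrite mulrA.
  rewrite (Lexp R eps mu D mD p1 n1 w1 _ _ l.+1 Hp1 Hn1) //.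
    by apply: eq_bigr => i _; rewrite mom1.
  move=> a k ha.
  apply: (eq_integrable mD _ _ _ (Hint a (aidx p2 n2 j) (k + kidx p2 n2 j)%N ha (aidx_lt p2 n2 j Hp2 Hn2))).
  by move=> x _; rewrite exprD; congr (_%:E); ring.
have LI : forall (P : nat -> {poly R}) i, (i <= l)%N ->
    (forall b, (b < p2)%N -> (size (P b) <= nucount p2 n2 b l.+1)%N) ->
    mint eps mu D (fun x => (\sum_(b < p2) (P b).[x] * w2 b x) * w1 (aidx p1 n1 i) x
                             * x ^+ (kidx p1 n1 i))
    = \sum_(j < l.+1) (P (aidx p2 n2 j))`_(kidx p2 n2 j) * g i j.
  move=> P i il hP.
  have -> : (fun x => (\sum_(b < p2) (P b).[x] * w2 b x) * w1 (aidx p1 n1 i) x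
                             * x ^+ (kidx p1 n1 i)) =
            (fun x => (\sum_(b < p2) (P b).[x] * w2 b x) * (w1 (aidx p1 n1 i) x
                             * x ^+ (kidx p1 n1 i))).
    by apply: boolp.funext => x; rewrite mulrA.
  rewrite (Lexp R eps mu D mD p2 n2 w2 _ _ l.+1 Hp2 Hn2) //.
    by apply: eq_bigr => j _; rewrite mom2.
  move=> b k hb.
  apply: (eq_integrable mD _ _ _ (Hint (aidx p1 n1 i) b (k + kidx p1 n1 i)%N (aidx_lt p1 n1 i Hp1 Hn1) hb)).
  by move=> x _; rewrite exprD; congr (_%:E); ring.
have szA : forall a, (a < p1)%N -> (size (Apoly p1 n1 S l a) <= nucount p1 n1 a l.+1)%N.
  by move=> a _; apply: size_gen.
have cfA : forall i, (i < l.+1)%N ->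
    (Apoly p1 n1 S l (aidx p1 n1 i))`_(kidx p1 n1 i) = S l i.
  by move=> i il; apply: coef_gen.
have ortA : forall j, (j < l)%N ->
    mint eps mu D (fun x => (\sum_(a < p1) (Apoly p1 n1 S l a).[x] * w1 a x)
       * w2 (aidx p2 n2 j) x * x ^+ (kidx p2 n2 j)) = 0.
  move=> j jl; rewrite LII //.
  under eq_bigr => i _ do rewrite cfA //.
  by rewrite HSgB HB.
have szB : forall b, (b < p2)%N -> (size (Abarpoly p2 n2 Sbar' l b) <= nucount p2 n2 b l.+1)%N.
  by move=> b _; exact: (size_gen R p2 n2 (fun j => Sbar' j l) l.+1 b Hp2 Hn2).
have cfB : forall j, (j < l.+1)%N ->
    (Abarpoly p2 n2 Sbar' l (aidx p2 n2 j))`_(kidx p2 n2 j) = Sbar' j l.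
  by move=> j jl; exact: (coef_gen R p2 n2 (fun j => Sbar' j l) l.+1 j Hp2 Hn2 jl).
have V := Vsol R S Sbar Sbar' g l HS HB HSgB HBB'.
have ortB : forall i, (i <= l)%N ->
    mint eps mu D (fun x => (\sum_(b < p2) (Abarpoly p2 n2 Sbar' l b).[x] * w2 b x)
       * w1 (aidx p1 n1 i) x * x ^+ (kidx p1 n1 i)) = (i == l)%:R.
  move=> i il; rewrite LI //.
  under eq_bigr => j _ do rewrite cfB //.
  exact: V.
have a1lt := aidx_lt p1 n1 l Hp1 Hn1.
split; [split|split].
-
  split.
  + exact: szA.
  + by apply: monic_gen => //; case: HS.
  + move=> b k hb hk.
    have [j [jl <- <-]] := kidx_ex p2 n2 b k l Hp2 Hn2 hk.
    exact: ortA.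
-
  move=> Bp [hsz [hmon hszm] hort] a ha.
  have cl : (Bp (aidx p1 n1 l))`_(kidx p1 n1 l) = S l l.
    case: HS => _ ->; move/monicP: hmon; rewrite /lead_coef hszm nucountS eqxx -kidxE //.
    by rewrite addn1.
  set c := fun i => (Bp (aidx p1 n1 i))`_(kidx p1 n1 i) - S l i.
  have c0 : forall i, (i < l)%N -> c i = 0.
    apply: (rowzero R S Sbar g l c HS HB HBd HSgB) => j jl.
    have hb := aidx_lt p2 n2 j Hp2 Hn2.
    have hk := kidx_lt p2 n2 j l Hp2 Hn2 jl.
    have E1 := hort _ _ hb hk; rewrite LII // in E1.
    have E2 := ortA j jl; rewrite LII // in E2.
    have : \sum_(i < l.+1) c i * g i j = 0.
      rewrite /c; under eq_bigr => i _ do rewrite mulrBl.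
      by rewrite sumrB E1; under eq_bigr => i _ do rewrite -cfA //; rewrite E2 subr0.
    by rewrite big_ord_recr /= /c cl subrr mul0r addr0.
  apply: (poly_eq_coefs R p1 n1 l.+1) => //; [exact: hsz | exact: szA |].
  move=> i il; rewrite cfA //.
  case: (ltnP i l) => h.
    by apply/eqP; rewrite -subr_eq0; apply/eqP; exact: c0.
  by have -> : i = l by lia.
-
  split.
  + exact: szB.
  + move=> a k ha hk.
    have [i [il <- <-]] := kidx_ex p1 n1 a k l Hp1 Hn1 hk.
    rewrite ortB; last exact: ltnW.
    by have -> : (i == l) = false by apply/eqP; lia.
  + by rewrite -kidxE // ortB // eqxx.
-
  move=> Bp [hsz hort hnorm] b hb.
  set c := fun j => (Bp (aidx p2 n2 j))`_(kidx p2 n2 j) - Sbar' j l.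
  have c0 : forall j, (j < l.+1)%N -> c j = 0.
    apply: (colzero R S Sbar g l.+1 c HS HB HBd HSgB) => i il.
    have E1 : mint eps mu D (fun x => (\sum_(b < p2) (Bp b).[x] * w2 b x)
       * w1 (aidx p1 n1 i) x * x ^+ (kidx p1 n1 i)) = (i == l)%:R.
      case: (ltnP i l) => h.
        rewrite hort //; last exact: kidx_lt.
          by have -> : (i == l) = false by apply/eqP; lia.
        exact: aidx_lt.
      have ei : i = l by lia.
      by rewrite ei eqxx kidxE.
    rewrite LI // in E1.
    have E2 := ortB i il; rewrite LI // in E2.
    rewrite /c; under eq_bigr => j _ do rewrite mulrBr.
    rewrite sumrB; under eq_bigr => j _ do rewrite mulrC.
    rewrite E1; under eq_bigr => j _ do rewrite mulrC -cfB //.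
    by rewrite E2 subrr.
  apply: (poly_eq_coefs R p2 n2 l.+1) => //; [exact: hsz | exact: szB |].
  move=> j jl; rewrite cfB //.
  by apply/eqP; rewrite -subr_eq0; apply/eqP; exact: c0.

Qed.
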